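(* Let $\mathbb{F}$ be a field, $\sigma$ an $\mathbb{F}$-algebra endomorphism of the polynomial algebra $\mathbb{F}[y]$, $\delta$ a $\sigma$-derivation of $\mathbb{F}[y]$, and $A=\mathbb{F}[y][x;\sigma,\delta]$ the Ore extension. Then the following are equivalent: (i) $\operatorname{GKdim}(A)=2$; (ii) $\operatorname{GKdim}(A)<\infty$; (iii) $\deg(\sigma(y))\le 1$; (iv) $\sigma$ is locally algebraic.
   Context: A $\sigma$-derivation of an algebra $B$ is an $\mathbb{F}$-linear map $\delta:B\to B$ with $\delta(ab)=\sigma(a)\delta(b)+\delta(a)b$. The Ore extension $B[x;\sigma,\delta]$ is the free left $B$-module $\bigoplus_{i\ge0}Bx^i$ with multiplication determined by $xa=\sigma(a)x+\delta(a)$ for $a\in B$. An endomorphism $\sigma$ of $B$ is locally algebraic if every finite-dimensional subspace of $B$ containing $1$ is contained in a finite-dimensional subspace $U$ with $\sigma(U)\subseteq U$. $\operatorname{GKdim}$ is Gelfand–Kirillov dimension. *)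

(* Defs.v *)
From HB Require Import structures.
From mathcomp Require Import Rstruct.
From mathcomp Require Import all_boot all_order all_algebra.
From mathcomp Require Import boolp classical_sets reals ereal exp sequences.
Set Implicit Arguments. Unset Strict Implicit. Unset Printing Implicit Defensive.
Import Order.TTheory GRing.Theory Num.Theory.
Local Open Scope ring_scope.

Section LinAlg.
Variables (F : fieldType) (V : zmodType) (scale : F -> V -> V).

Definition inspan (s : seq V) (v : V) : Prop :=
  exists c : 'I_(size s) -> F, v = \sum_(i < size s) scale (c i) s`_i.

Definition lin_indep (s : seq V) : Prop :=
  forall c : 'I_(size s) -> F,
    \sum_(i < size s) scale (c i) s`_i = 0 -> forall i, c i = 0.

(* dimension of span t = maximal size of a linearly independent family in span t
   (this is at most size t) *)
Definition spandim (t : seq V) : nat :=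
  \max_(k < (size t).+1 |
        `[< exists s : seq V, size s = k /\ lin_indep s /\
                              forall i : 'I_(size s), inspan t s`_i >]) k.
End LinAlg.

Definition inspanB (F : fieldType) := @inspan F {poly F} *:%R.

(* sigma is locally algebraic: every finite-dimensional subspace W (W = span s)
   containing 1 is contained in a finite-dimensional sigma-stable subspace U = span u *)
Definition locally_algebraic (F : fieldType) (sigma : {poly F} -> {poly F}) : Prop :=
  forall s : seq {poly F}, inspanB s 1 ->
    exists u : seq {poly F},
      (forall v, inspanB s v -> inspanB u v) /\
      (forall v, inspanB u v -> inspanB u (sigma v)).

(* ---------- the Ore extension A = F[y][x; sigma, delta] ----------
   As a left B-module A is free with basis 1, x, x^2, ...; we represent
   sum_i a_i x^i by the polynomial sum_i a_i X^i in {poly {poly F}}. *)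
Section Ore.
Variables (F : fieldType) (sigma delta : {poly F} -> {poly F}).

(* left multiplication by x:  x (sum_j b_j x^j) = sum_j (sigma b_j x^(j+1) + delta b_j x^j) *)
Definition ore_xmul (q : {poly {poly F}}) : {poly {poly F}} :=
  \sum_(j < size q) ((sigma q`_j)%:P * 'X^(j.+1) + (delta q`_j)%:P * 'X^j).

Definition ore_mul (p q : {poly {poly F}}) : {poly {poly F}} :=
  \sum_(i < size p) p`_i *: iter i ore_xmul q.

Definition ore_scale (c : F) (p : {poly {poly F}}) : {poly {poly F}} := c%:P *: p.

Definition inspanA := @inspan F {poly {poly F}} ore_scale.

Fixpoint ore_words (s : seq {poly {poly F}}) (n : nat) : seq {poly {poly F}} :=
  if n is n'.+1 then [seq ore_mul a w | a <- s, w <- ore_words s n'] else [:: 1].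

(* dim_F (V^n) where V = span s; V^n is spanned by the n-fold products *)
Definition ore_powdim (s : seq {poly {poly F}}) (n : nat) : nat :=
  spandim ore_scale (ore_words s n).

Local Open Scope ereal_scope.
Definition ore_gk_sub (s : seq {poly {poly F}}) : \bar Rdefinitions.R :=
  limn_esup (fun n => ((ln ((ore_powdim s n)%:R : Rdefinitions.R) / ln (n%:R : Rdefinitions.R))%R)%:E).

Definition ore_GKdim : \bar Rdefinitions.R :=
  ereal_sup [set ore_gk_sub s | s in [set s | inspanA s 1]].
End Ore.

(* Main.v *)
Require Import Defs.
From HB Require Import structures.
From mathcomp Require Import Rstruct.
From mathcomp Require Import all_boot all_order all_algebra.
From mathcomp Require Import boolp classical_sets reals ereal exp sequences.
Import Order.TTheory GRing.Theory Num.Theory.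
Local Open Scope ring_scope.
From mathcomp Require Import topology normedtype.
From mathcomp Require Import zify ring lra.
Set Implicit Arguments. Unset Strict Implicit. Unset Printing Implicit Defensive.

Lemma natle1 a b e : (a <= b -> (a + e).-1 <= b.+1 + e)%N.
Proof. lia. Qed.

Lemma natle2 a b e : (a <= b + e -> (a + 2).-1 <= b.+1 + e)%N.
Proof. lia. Qed.

Lemma natle3 b i e : (b + i * e + e <= b + i.+1 * e)%N.
Proof. lia. Qed.

Lemma natle4 u b1 b2 i a1 v : (u <= b1 -> i < a1 -> u + (b2 + i * v) <= b1 + b2 + a1 * v)%N.
Proof. nia. Qed.

Section OreAlg.
Variable F : fieldType.
Variable sigma : {lrmorphism {poly F} -> {poly F}}.
Variable delta : {linear {poly F} -> {poly F}}.
Hypothesis hdelta : forall a b : {poly F}, delta (a * b) = sigma a * delta b + delta a * b.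

Local Notation xmul := (ore_xmul sigma delta).
Local Notation omul := (ore_mul sigma delta).

Lemma xmulE q : xmul q = map_poly sigma q * 'X + map_poly delta q.
Proof.
rewrite /ore_xmul big_split /= /map_poly !poly_def mulr_suml.
congr (_ + _); apply: eq_bigr => i _; rewrite -mul_polyC //.
by rewrite -mulrA -exprSr.
Qed.

Lemma omulE p q : omul p q = \sum_(i < size p) p`_i *: iter i xmul q.
Proof. by []. Qed.

Lemma sigma1 : sigma 1 = 1. Proof. exact: rmorph1. Qed.
Lemma sigmaC c : sigma c%:P = c%:P.
Proof. by rewrite -alg_polyC linearZ /= rmorph1. Qed.
Lemma delta1 : delta 1 = 0.
Proof.
have := hdelta 1 1; rewrite !mulr1 sigma1 mul1r => h.
by apply: (@addrI _ (delta 1)); rewrite addr0 -h.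
Qed.
Lemma deltaC c : delta c%:P = 0.
Proof. by rewrite -alg_polyC linearZ /= delta1 scaler0. Qed.

Lemma sigma_comp p : sigma p = p \Po (sigma 'X).
Proof.
elim/poly_ind: p => [|p c IH]; first by rewrite raddf0 comp_poly0.
by rewrite rmorphD rmorphM /= sigmaC comp_polyD comp_polyM comp_polyX comp_polyC IH.
Qed.

Section DegLe1.
Hypothesis hs : (size (sigma 'X) <= 2)%N.

Lemma size_sigma_le p : (size (sigma p) <= size p)%N.
Proof.
rewrite sigma_comp; have [->|p0] := eqVneq p 0; first by rewrite comp_poly0 size_poly0.
apply: leq_trans (size_comp_poly_leq _ _) _.
have : (0 < size p)%N by rewrite size_poly_gt0.
move: hs; case: (size (sigma 'X)) => [|[|[|]]] //= _; nia.
Qed.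

Lemma size_delta_le p : (size (delta p) <= size p + size (delta 'X))%N.
Proof.
elim/poly_ind: p => [|p c IH]; first by rewrite raddf0 size_poly0.
have [->|p0] := eqVneq p 0.
  by rewrite mul0r add0r deltaC size_poly0.
rewrite raddfD /= deltaC addr0 hdelta size_MXaddC (negbTE p0) /=.
apply: leq_trans (size_polyD _ _) _; rewrite geq_max; apply/andP; split.
  apply: leq_trans (size_polyMleq _ _) _; apply: natle1; exact: size_sigma_le.
apply: leq_trans (size_polyMleq _ _) _; rewrite size_polyX; apply: natle2; exact: IH.
Qed.

Definition bnd (a b : nat) (p : {poly {poly F}}) :=
  leq (size p) a /\ forall i : nat, leq (size p`_i) b.

Lemma bnd_mono a a' b b' p : (a <= a')%N -> (b <= b')%N -> bnd a b p -> bnd a' b' p.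
Proof.
move=> ha hb [h1 h2]; split; first exact: leq_trans ha.
by move=> i; exact: leq_trans (h2 i) hb.
Qed.

Lemma bnd0 a b : bnd a b 0.
Proof. by split => [|i]; rewrite ?size_poly0 // coef0 size_poly0. Qed.

Lemma bndD a b p q : bnd a b p -> bnd a b q -> bnd a b (p + q).
Proof.
move=> [h1 h2] [h3 h4]; split.
  by apply: leq_trans (size_polyD _ _) _; rewrite geq_max h1 h3.
by move=> i; rewrite coefD; apply: leq_trans (size_polyD _ _) _; rewrite geq_max h2 h4.
Qed.

Lemma bnd_sum a b (I : Type) (r : seq I) (P : pred I) (f : I -> {poly {poly F}}) :
  (forall i, P i -> bnd a b (f i)) -> bnd a b (\sum_(i <- r | P i) f i).
Proof.
move=> h; elim/big_rec: _ => [|i x Pi hx]; first exact: bnd0.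
by apply: bndD => //; exact: h.
Qed.

Lemma bndZ a b (c : {poly F}) p : bnd a b p -> bnd a (size c + b) (c *: p).
Proof.
move=> [h1 h2]; split; first exact: leq_trans (size_scale_leq _ _) h1.
move=> i; rewrite coefZ; apply: leq_trans (size_polyMleq _ _) _.
by have := h2 i; lia.
Qed.

Lemma bnd_scale a b (c : F) p : bnd a b p -> bnd a b (ore_scale c p).
Proof.
move=> [h1 h2]; split; first exact: leq_trans (size_scale_leq _ _) h1.
by move=> i; rewrite coefZ mul_polyC; apply: leq_trans (size_scale_leq _ _) _.
Qed.

Lemma bnd_xmul a b q : bnd a b q -> bnd a.+1 (b + size (delta 'X)) (xmul q).
Proof.
move=> [h1 h2]; rewrite xmulE; split.
  apply: leq_trans (size_polyD _ _) _; rewrite geq_max; apply/andP; split.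
    apply: leq_trans (size_polyMleq _ _) _; rewrite size_polyX addn2 /=.
    exact: leq_trans (size_poly _ _) h1.
  exact: leq_trans (size_poly _ _) (leq_trans h1 (leqnSn _)).
move=> i; rewrite coefD coefMX !coef_map /=.
apply: leq_trans (size_polyD _ _) _; rewrite geq_max; apply/andP; split.
  case: (i == 0)%N; first by rewrite size_poly0.
  exact: leq_trans (size_sigma_le _) (leq_trans (h2 _) (leq_addr _ _)).
by apply: leq_trans (size_delta_le _) _; rewrite leq_add2r.
Qed.

Lemma bnd_iter a b q i : bnd a b q ->
  bnd (a + i) (b + i * size (delta 'X)) (iter i xmul q).
Proof.
move=> h; elim: i => [|i IH] /=; first by rewrite addn0 mul0n addn0.
by apply: bnd_mono (bnd_xmul IH); rewrite ?addnS // natle3.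
Qed.

Lemma bnd_omul a1 b1 a2 b2 p q : bnd a1 b1 p -> bnd a2 b2 q ->
  bnd (a1 + a2) (b1 + b2 + a1 * size (delta 'X)) (omul p q).
Proof.
move=> [h1 h2] hq; rewrite omulE; apply: bnd_sum => -[i hi] _ /=.
apply: bnd_mono (bndZ _ (bnd_iter i hq)).
  by have := leq_trans hi h1; lia.
apply: natle4; [exact: h2 | exact: leq_trans hi h1].
Qed.
End DegLe1.
End OreAlg.


Lemma natle5 n M K E : (M + (n * (M + K * E) + 1) + K * E <= n.+1 * (M + K * E) + 1)%N.
Proof. nia. Qed.

Section LinBound.
Variable F : fieldType.

Lemma indep_bnd_size a b (s : seq {poly {poly F}}) :
  lin_indep (@ore_scale F) s -> (forall i : 'I_(size s), bnd a b s`_i) ->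
  (size s <= a * b)%N.
Proof.
move=> hind hb.
pose A (i : 'I_(size s)) : 'M[F]_(a, b) := \matrix_(j1 < a, j2 < b) ((s`_i)`_j1)`_j2.
pose M : 'M[F]_(size s, a * b) := \matrix_(i, j) (mxvec (A i)) 0 j.
suff : row_free M by move/eqP => <-; exact: rank_leq_col.
have key : forall v : 'rV[F]_(size s), v *m M = 0 -> v = 0.
  move=> v hv.
  have hsum : \sum_(i < size s) ore_scale (v 0 i) s`_i = 0.
    apply/polyP => j1; apply/polyP => j2; rewrite !coef0.
    rewrite !coef_sum; under eq_bigr => i _ do rewrite /ore_scale coefZ mul_polyC.
    under eq_bigr => i _ do rewrite coefZ.
    have [hj1|hj1] := ltnP j1 a; last first.
      rewrite big1 // => i _; have [h1 _] := hb i.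
      by rewrite (nth_default 0 (leq_trans h1 hj1)) coef0 mulr0.
    have [hj2|hj2] := ltnP j2 b; last first.
      rewrite big1 // => i _; have [_ h2] := hb i.
      by rewrite (nth_default 0 (leq_trans (h2 j1) hj2)) mulr0.
    have := congr1 (fun m : 'M[F]_(1, a * b) => m 0 (mxvec_index (Ordinal hj1) (Ordinal hj2))) hv.
    rewrite /= mxE mxE => h; rewrite -[X in _ = X]h; apply: eq_bigr => i _.
    by rewrite mxE mxvecE mxE.
  by apply/rowP => i; rewrite mxE (hind _ hsum i).
rewrite -kermx_eq0; apply/eqP/row_matrixP => i; rewrite row0.
by apply: key; rewrite -row_mul mulmx_ker row0.
Qed.
End LinBound.

Section Span.
Variable F : fieldType.
Implicit Types t : seq {poly {poly F}}.

Lemma spandim_le t N :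
  (forall s : seq {poly {poly F}}, lin_indep (@ore_scale F) s ->
     (forall i : 'I_(size s), inspan (@ore_scale F) t s`_i) -> (size s <= N)%N) ->
  (spandim (@ore_scale F) t <= N)%N.
Proof.
move=> h; apply/bigmax_leqP => k /asboolP [s [<- [hi hs]]].
exact: h.
Qed.

Lemma spandim_ge t s : lin_indep (@ore_scale F) s ->
  (forall i : 'I_(size s), inspan (@ore_scale F) t s`_i) -> (size s <= size t)%N ->
  (size s <= spandim (@ore_scale F) t)%N.
Proof.
move=> hi hs hst; rewrite /spandim.
have hk : (size s < (size t).+1)%N by [].
apply: (@leq_bigmax_cond _ _ (fun k : 'I_(size t).+1 => nat_of_ord k) (Ordinal hk)).
by apply/asboolP; exists s.
Qed.

Lemma ore_scale1 (p : {poly {poly F}}) : ore_scale 1 p = p.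
Proof. by rewrite /ore_scale scale1r. Qed.
Lemma ore_scale0 (p : {poly {poly F}}) : ore_scale 0 p = 0.
Proof. by rewrite /ore_scale scale0r. Qed.

Lemma inspan_mem t x : x \in t -> inspan (@ore_scale F) t x.
Proof.
move=> xt; have hi : (index x t < size t)%N by rewrite index_mem.
exists (fun i => if i == Ordinal hi then 1 else 0).
rewrite (bigD1 (Ordinal hi)) //= eqxx ore_scale1 nth_index // big1 ?addr0 //.
by move=> i /negbTE ->; rewrite ore_scale0.
Qed.

Lemma inspan_bnd t a b v : (forall i : 'I_(size t), bnd a b t`_i) ->
  inspan (@ore_scale F) t v -> bnd a b v.
Proof.
move=> h [c ->]; apply: bnd_sum => i _; exact/bnd_scale/h.
Qed.
End Span.

Section Words.
Variable F : fieldType.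
Variable sigma : {lrmorphism {poly F} -> {poly F}}.
Variable delta : {linear {poly F} -> {poly F}}.
Hypothesis hdelta : forall a b : {poly F}, delta (a * b) = sigma a * delta b + delta a * b.
Hypothesis hs : (size (sigma 'X) <= 2)%N.

Lemma bnd1 : bnd 1 1 (1 : {poly {poly F}}).
Proof.
split; first by rewrite size_poly1.
by move=> i; rewrite coef1; case: (i == 0)%N; rewrite ?size_poly1 ?size_poly0.
Qed.

Lemma bnd_words (s : seq {poly {poly F}}) K M :
  (forall p, p \in s -> bnd K M p) -> forall n w, w \in ore_words sigma delta s n ->
  bnd (n * K + 1) (n * (M + K * size (delta 'X)) + 1) w.
Proof.
move=> hsK; elim => [|n IH] w /=.
  by rewrite inE => /eqP ->; exact: bnd1.
case/allpairsP => -[p w'] [/= ps w'n ->].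
apply: bnd_mono (bnd_omul hdelta hs (hsK _ ps) (IH _ w'n)).
  by rewrite mulSn addnA.
by rewrite natle5.
Qed.
End Words.


Lemma natkey sj si lj li B : (lj < B -> li < B -> sj * B + lj < si * B + li ->
  sj < si \/ (sj = si /\ lj < li))%N.
Proof. nia. Qed.

Section Indep.
Variable F : fieldType.

Definition okey (B : nat) (p : {poly {poly F}}) := (size p * B + size (lead_coef p))%N.

Lemma indep_lead (s : seq {poly {poly F}}) (B : nat) :
  (forall p, p \in s -> p != 0) ->
  (forall p, p \in s -> size (lead_coef p) < B)%N ->
  uniq [seq okey B p | p <- s] ->
  lin_indep (@ore_scale F) s.
Proof.
move=> hnz hB hu c hsum i; apply/eqP/negPn/negP => ci.
pose A := [pred j : 'I_(size s) | c j != 0].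
have hA : (0 < #|A|)%N by apply/card_gt0P; exists i.
case: (eq_bigmax_cond (fun j : 'I_(size s) => okey B s`_j) hA) => i0 Ai0 hmax.
have hlt : forall j : 'I_(size s), c j != 0 -> j != i0 -> (okey B s`_j < okey B s`_i0)%N.
  move=> j cj ji; rewrite ltn_neqAle; apply/andP; split.
    rewrite -(nth_map _ 0%N) // -[X in _ != X](nth_map _ 0%N) //.
    by rewrite nth_uniq ?size_map.
  by rewrite -hmax; exact: (@leq_bigmax_cond _ A (fun j : 'I_(size s) => okey B s`_j) j).
have memi : forall j : 'I_(size s), s`_j \in s by move=> j; exact: mem_nth.
pose a := (size s`_i0).-1; pose b := (size (lead_coef s`_i0)).-1.
have := congr1 (fun p : {poly {poly F}} => (p`_a)`_b) hsum.
rewrite /= !coef0 !coef_sum (bigD1 i0) //= big1 ?addr0; last first.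
  move=> j ji; have [->|cj] := eqVneq (c j) 0; first by rewrite ore_scale0 !coef0.
  rewrite /ore_scale coefZ mul_polyC coefZ.
  have hj := hlt j cj ji; rewrite /okey in hj.
  have := hB _ (memi j); have := hB _ (memi i0).
  move=> h1 h2; case: (natkey h2 h1 hj) => [hs|[hs hl]].
    have -> : s`_j`_a = 0.
      by apply: nth_default; move: hs; rewrite /a; move: (size s`_j) (size s`_i0) => u v; lia.
    by rewrite coef0 mulr0.
  rewrite /a -hs -lead_coefE.
  have -> : (lead_coef s`_j)`_b = 0.
    by apply: nth_default; move: hl; rewrite /b; move: (size (lead_coef s`_j)) (size (lead_coef s`_i0)) => u v; lia.
  by rewrite mulr0.
rewrite /ore_scale coefZ mul_polyC coefZ -lead_coefE -lead_coefE.
move/eqP; rewrite mulf_eq0 (negbTE Ai0) /= lead_coef_eq0 lead_coef_eq0.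
by rewrite (negbTE (hnz _ (memi i0))).
Qed.
End Indep.


Lemma natkey_eq a b c d m : (a < m -> c < m -> b.+1 * m.+1 + a.+1 = d.+1 * m.+1 + c.+1 -> b = d /\ a = c)%N.
Proof.
move=> ha hc h.
have hbd : b = d.
  case: (ltngtP b d) => // hbd; nia.
subst; lia.
Qed.

Section WordsCalc.
Variable F : fieldType.
Variable sigma : {lrmorphism {poly F} -> {poly F}}.
Variable delta : {linear {poly F} -> {poly F}}.
Hypothesis hdelta : forall a b : {poly F}, delta (a * b) = sigma a * delta b + delta a * b.

Local Notation xmul := (ore_xmul sigma delta).
Local Notation omul := (ore_mul sigma delta).

Definition Yo : {poly {poly F}} := ('X : {poly F})%:P.
Definition s0 : seq {poly {poly F}} := [:: 1; 'X; Yo].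

Lemma omul1 w : omul 1 w = w.
Proof. by rewrite omulE size_poly1 big_ord1 /= coef1 /= scale1r. Qed.

Lemma omulX w : omul 'X w = xmul w.
Proof.
by rewrite omulE size_polyX big_ord_recr big_ord1 /= !coefX /= scale0r add0r scale1r.
Qed.

Lemma omulY w : omul Yo w = 'X *: w.
Proof.
by rewrite omulE /Yo size_polyC polyX_eq0 /= big_ord1 /= coefC.
Qed.

Lemma xmulXn j : xmul ('X^j : {poly {poly F}}) = 'X^(j.+1).
Proof.
rewrite xmulE map_polyXn -exprSr.
suff -> : map_poly delta 'X^j = 0 by rewrite addr0.
apply/polyP => i; rewrite coef_map coefXn coef0.
case: (i == j) => /=; first by rewrite mulr1n (delta1 hdelta).
by rewrite mulr0n raddf0.
Qed.

Lemma mono_words n i j : (i + j <= n)%N ->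
  ('X^i : {poly F}) *: ('X^j : {poly {poly F}}) \in ore_words sigma delta s0 n.
Proof.
elim: n i j => [|n IH] i j.
  by rewrite /= leqn0 addn_eq0 => /andP[/eqP -> /eqP ->]; rewrite !expr0 scale1r inE.
move=> hij; case: i hij => [|i] hij.
  case: j hij => [|j] hj.
    rewrite !expr0 scale1r -{1}(omul1 1).
    by apply: allpairs_f; [rewrite inE eqxx | have := IH 0 0 isT; rewrite !expr0 scale1r].
  rewrite expr0 scale1r -xmulXn -omulX.
  apply: allpairs_f; first by rewrite !inE eqxx orbT.
  by have := IH 0 j hj; rewrite expr0 scale1r.
rewrite exprS -scalerA -omulY; apply: allpairs_f; first by rewrite !inE eqxx !orbT.
exact: IH.
Qed.
End WordsCalc.

Section SqFamily.
Variable F : fieldType.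
Variable sigma : {lrmorphism {poly F} -> {poly F}}.
Variable delta : {linear {poly F} -> {poly F}}.
Hypothesis hdelta : forall a b : {poly F}, delta (a * b) = sigma a * delta b + delta a * b.

Definition mono i j : {poly {poly F}} := ('X^i : {poly F}) *: ('X^j : {poly {poly F}}).

Lemma size_mono i j : size (mono i j) = j.+1.
Proof. by rewrite /mono size_scale ?size_polyXn // monic_neq0 ?monicXn. Qed.

Lemma lead_mono i j : lead_coef (mono i j) = 'X^i.
Proof. by rewrite /mono lead_coefZ lead_coefXn mulr1. Qed.

Definition fam2 m := [seq mono i j | i <- iota 0 m, j <- iota 0 m].

Lemma fam2_keys m : uniq [seq okey m.+1 p | p <- fam2 m].
Proof.
rewrite /fam2 map_allpairs; apply: allpairs_uniq; rewrite ?iota_uniq //.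
move=> [i1 j1] [i2 j2] /allpairsP[[a b] [/= ha hb [-> ->]]] /allpairsP[[c d] [/= hc hd [-> ->]]].
rewrite /= /okey !size_mono !lead_mono !size_polyXn.
move: ha hb hc hd; rewrite !mem_iota /= !add0n => ha hb hc hd h.
by case: (natkey_eq ha hc h) => -> ->.
Qed.

Lemma fam2_indep m : lin_indep (@ore_scale F) (fam2 m).
Proof.
apply: (@indep_lead _ _ m.+1); last exact: fam2_keys.
  move=> p /allpairsP[[i j] [_ _ ->]] /=.
  by rewrite -size_poly_eq0 size_mono.
move=> p /allpairsP[[i j] [/= hi _ ->]].
by rewrite lead_mono size_polyXn ltnS; rewrite mem_iota in hi.
Qed.

Lemma fam2_uniq m : uniq (fam2 m).
Proof. exact: map_uniq (fam2_keys m). Qed.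

Lemma size_fam2 m : size (fam2 m) = (m * m)%N.
Proof. by rewrite size_allpairs size_iota. Qed.

Lemma fam2_words n : {subset fam2 n./2 <= ore_words sigma delta (s0 F) n}.
Proof.
move=> p /allpairsP[[i j] [/= hi hj ->]].
apply: (mono_words hdelta); move: hi hj; rewrite !mem_iota /= !add0n.
have : ((n./2).*2 <= n)%N.
  by rewrite -[X in (_ <= X)%N](odd_double_half n) leq_addl.
move: (n./2) => m; lia.
Qed.

Lemma powdim_sq n : (n./2 * n./2 <= ore_powdim sigma delta (s0 F) n)%N.
Proof.
rewrite -size_fam2; apply: spandim_ge; first exact: fam2_indep.
  move=> i; apply: inspan_mem; apply: fam2_words; exact: mem_nth.
apply: uniq_leq_size; [exact: fam2_uniq | exact: fam2_words].
Qed.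
End SqFamily.


Fixpoint allbits (m : nat) : seq (seq bool) :=
  if m is m'.+1 then [seq b :: l | b <- [:: false; true], l <- allbits m'] else [:: [::]].

Lemma allbitsS m : allbits m.+1 = [seq b :: l | b <- [:: false; true], l <- allbits m].
Proof. by []. Qed.

Lemma size_allbits m : size (allbits m) = (2 ^ m)%N.
Proof. by elim: m => [|m IH] //; rewrite allbitsS size_allpairs IH expnS. Qed.

Lemma allbits_size m l : l \in allbits m -> size l = m.
Proof.
elim: m l => [|m IH] l; first by rewrite inE => /eqP ->.
by rewrite allbitsS; case/allpairsP => -[b l'] [_ /= /IH <- ->].
Qed.

Lemma allbits_uniq m : uniq (allbits m).
Proof.
elim: m => [|m IH] //; rewrite allbitsS; apply: allpairs_uniq => //.
by move=> [b1 l1] [b2 l2] _ _ /= [-> ->].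
Qed.

Section Bits.
Variable d : nat.
Hypothesis hd : (2 <= d)%N.

Fixpoint Dv (l : seq bool) : nat := if l is b :: l' then (Dv l' * d + b)%N else 0%N.

Lemma Dv_lt l : (Dv l < d ^ size l)%N.
Proof.
elim: l => [|b l IH] /=; first by rewrite expn0.
rewrite expnS; move: (Dv l) (d ^ size l)%N IH => x y h.
have : (b <= 1)%N by case: b. move: (nat_of_bool b) => c hc; nia.
Qed.

Lemma Dv_inj l1 l2 : size l1 = size l2 -> Dv l1 = Dv l2 -> l1 = l2.
Proof.
elim: l1 l2 => [|b1 l1 IH] [|b2 l2] //= [hs] h.
have hb : b1 = b2.
  have := congr1 (modn^~ d) h; rewrite !modnMDl !modn_small; last 2 first.
  - by apply: leq_trans _ hd; rewrite ltnS leq_b1.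
  - by apply: leq_trans _ hd; rewrite ltnS leq_b1.
  by move=> e; move: h e; case: b1; case: b2.
rewrite hb in h *; congr (_ :: _); apply: IH => //.
have : (Dv l1 * d = Dv l2 * d)%N by move: h; lia.
by move/eqP; rewrite eqn_pmul2r ?(leq_trans _ hd) // => /eqP.
Qed.
End Bits.

Section ExpFamily.
Variable F : fieldType.
Variable sigma : {lrmorphism {poly F} -> {poly F}}.
Variable delta : {linear {poly F} -> {poly F}}.
Hypothesis hdelta : forall a b : {poly F}, delta (a * b) = sigma a * delta b + delta a * b.
Hypothesis hbig : (2 < size (sigma 'X))%N.

Local Notation xmul := (ore_xmul sigma delta).
Local Notation omul := (ore_mul sigma delta).
Local Notation d := (size (sigma 'X)).-1.

Lemma sigma_size p : p != 0 -> size (sigma p) = ((size p).-1 * d).+1.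
Proof.
move=> p0; rewrite (sigma_comp sigma) -(size_comp_poly p (sigma 'X)) prednK //.
rewrite lt0n size_poly_eq0 -lead_coef_eq0 lead_coef_comp ?(ltn_trans _ hbig) //.
by rewrite mulf_neq0 ?expf_neq0 // lead_coef_eq0 // -size_poly_eq0; move: hbig; case: size.
Qed.

Lemma sigma_neq0 p : p != 0 -> sigma p != 0.
Proof. by move=> p0; rewrite -size_poly_eq0 sigma_size. Qed.

Lemma xmul_lead w : w != 0 ->
  size (xmul w) = (size w).+1 /\ lead_coef (xmul w) = sigma (lead_coef w).
Proof.
move=> w0; have hl : sigma (lead_coef w) != 0 by rewrite sigma_neq0 // lead_coef_eq0.
have hs : size (map_poly sigma w) = size w by rewrite size_map_poly_id0.
have h1 : map_poly sigma w != 0 by rewrite -size_poly_eq0 hs size_poly_eq0.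
have hlt : (size (map_poly delta w) < size (map_poly sigma w * 'X)%R)%N.
  by rewrite size_mulX // hs ltnS size_poly.
rewrite xmulE size_polyDl // lead_coefDl // size_mulX // hs lead_coefMX.
by rewrite lead_coef_map_id0 ?raddf0.
Qed.

Fixpoint wb (l : seq bool) : {poly {poly F}} :=
  if l is b :: l' then (if b then 'X else 1) *: xmul (wb l') else 1.

Lemma wb_prop l : size (wb l) = (size l).+1 /\ size (lead_coef (wb l)) = (Dv d l).+1.
Proof.
elim: l => [|b l [IH1 IH2]] /=; first by rewrite size_poly1 lead_coef1 size_poly1.
have w0 : wb l != 0 by rewrite -size_poly_eq0 IH1.
have [h1 h2] := xmul_lead w0.
have hL : lead_coef (wb l) != 0 by rewrite lead_coef_eq0.
have hb0 : (if b then 'X else 1 : {poly F}) != 0 by case: b; rewrite ?polyX_eq0 ?oner_eq0.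
split; first by rewrite (size_scale _ hb0) h1 IH1.
rewrite lead_coefZ h2.
case: b {hb0} => /=; last by rewrite mul1r addn0 (sigma_size hL) IH2.
by rewrite mulrC size_mulX ?sigma_neq0 // (sigma_size hL) IH2 addn1.
Qed.

Lemma wb_words l : wb l \in ore_words sigma delta (s0 F) (size l).*2.
Proof.
elim: l => [|b l IH]; first by rewrite /= inE.
rewrite [wb _]/=.
have -> : (if b then 'X else 1) *: xmul (wb l) = omul (if b then Yo F else 1) (omul 'X (wb l)).
  rewrite omulX; case: b; first by rewrite omulY.
  by rewrite omul1 scale1r.
change (ore_words sigma delta (s0 F) (size l).*2.+2) with
  [seq omul a w | a <- s0 F, w <- [seq omul a w | a <- s0 F, w <- ore_words sigma delta (s0 F) (size l).*2]].
apply: allpairs_f; first by case: b; rewrite !inE eqxx ?orbT.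
by apply: allpairs_f; rewrite ?inE ?eqxx ?orbT.
Qed.

Lemma hd2 : (2 <= d)%N.
Proof. by move: hbig; case: size => // -[|[|n]]. Qed.

Definition fam3 m := [seq wb l | l <- allbits m].

Lemma fam3_keys m : uniq [seq okey (d ^ m).+1 p | p <- fam3 m].
Proof.
rewrite -map_comp map_inj_in_uniq ?allbits_uniq // => l1 l2 h1 h2 /=.
rewrite /okey; have [a1 b1] := wb_prop l1; have [a2 b2] := wb_prop l2.
rewrite a1 b1 a2 b2 (allbits_size h1) (allbits_size h2) => /eqP.
rewrite eqn_add2l eqSS => /eqP h.
by apply: (Dv_inj hd2) => //; rewrite (allbits_size h1) (allbits_size h2).
Qed.

Lemma fam3_indep m : lin_indep (@ore_scale F) (fam3 m).
Proof.
apply: (@indep_lead _ _ (d ^ m).+1); last exact: fam3_keys.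
  move=> p /mapP[l _ ->]; have [h _] := wb_prop l.
  by rewrite -size_poly_eq0 h.
move=> p /mapP[l hl ->]; have [_ h] := wb_prop l.
by rewrite h ltnS -(allbits_size hl); exact: (Dv_lt hd2).
Qed.

Lemma fam3_words m : {subset fam3 m <= ore_words sigma delta (s0 F) m.*2}.
Proof.
move=> p /mapP[l hl ->]; have := wb_words l.
by rewrite (allbits_size hl).
Qed.

Lemma powdim_exp m : (2 ^ m <= ore_powdim sigma delta (s0 F) m.*2)%N.
Proof.
have hu : uniq (fam3 m) by exact: map_uniq (fam3_keys m).
have <- : size (fam3 m) = (2 ^ m)%N by rewrite size_map size_allbits.
apply: spandim_ge; first exact: fam3_indep.
  move=> i; apply: inspan_mem; apply: fam3_words; exact: mem_nth.
apply: uniq_leq_size; [exact: hu | exact: fam3_words].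
Qed.
End ExpFamily.


Section Upper.
Variable F : fieldType.

Lemma bnd_exists_one (p : {poly {poly F}}) : exists M, bnd (size p) M p.
Proof.
exists (\max_(i < size p) size (nth 0%R p i))%N; split => // i.
have [hi|hi] := ltnP i (size p).
  exact: (@leq_bigmax_cond _ xpredT (fun i : 'I_(size p) => size p`_i) (Ordinal hi)).
by rewrite nth_default // size_poly0.
Qed.

Lemma bnd_exists (s : seq {poly {poly F}}) : exists K M, forall p, p \in s -> bnd K M p.
Proof.
elim: s => [|p s [K [M IH]]]; first by exists 0%N, 0%N.
have [Mp hp] := bnd_exists_one p.
exists (maxn (size p) K), (maxn Mp M) => q; rewrite inE => /orP[/eqP ->|qs].
  by apply: bnd_mono hp; rewrite ?leq_maxl.
by apply: bnd_mono (IH _ qs); rewrite ?leq_maxr.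
Qed.

Variable sigma : {lrmorphism {poly F} -> {poly F}}.
Variable delta : {linear {poly F} -> {poly F}}.
Hypothesis hdelta : forall a b : {poly F}, delta (a * b) = sigma a * delta b + delta a * b.
Hypothesis hs : (size (sigma 'X) <= 2)%N.

Lemma powdim_ub (s : seq {poly {poly F}}) : exists K L, forall n,
  (ore_powdim sigma delta s n <= (n * K + 1) * (n * L + 1))%N.
Proof.
have [K [M hKM]] := bnd_exists s.
exists K, (M + K * size (delta 'X))%N => n.
apply: spandim_le => s' hind hin; apply: indep_bnd_size => // i.
apply: inspan_bnd (hin i) => j.
apply: (bnd_words hdelta hs hKM); exact: mem_nth.
Qed.
End Upper.


Section LocAlg.
Variable F : fieldType.

Lemma span_size_le (s : seq {poly F}) (v : {poly F}) :
  inspanB s v -> (size v <= \max_(p <- s) size p)%N.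
Proof.
case=> c ->; apply: (big_ind (fun q : {poly F} => size q <= \max_(p <- s) size p)%N).
- by rewrite size_poly0.
- move=> x y hx hy; apply: leq_trans (size_polyD _ _) _; by rewrite geq_max hx hy.
- move=> i _; apply: leq_trans (size_scale_leq _ _) _.
  by apply: (@leq_bigmax_seq _ _ xpredT (fun p : {poly F} => size p)) => //; exact: mem_nth.
Qed.

Definition Xs D : seq {poly F} := [seq 'X^i | i <- iota 0 D].

Lemma inspan_Xs D (v : {poly F}) : (size v <= D)%N -> inspanB (Xs D) v.
Proof.
move=> hv; exists (fun i => v`_i).
rewrite -(big_mkord xpredT (fun i => v`_i *: (Xs D)`_i)) /Xs size_map size_iota.
rewrite big_nat_cond (eq_bigr (fun i => v`_i *: 'X^i)); last first.
  by move=> i /andP[/andP[_ hi] _]; rewrite (nth_map 0%N) ?size_iota // nth_iota.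
rewrite -big_nat_cond big_mkord -poly_def; apply/polyP => k.
rewrite coef_poly; case: ltnP => // hk.
by rewrite nth_default // (leq_trans hv hk).
Qed.

Lemma Xs_size D (v : {poly F}) : inspanB (Xs D) v -> (size v <= D)%N.
Proof.
move=> /span_size_le h; apply: leq_trans h _.
apply/bigmax_leqP_seq => p /mapP[i hi ->] _.
by rewrite size_polyXn; rewrite mem_iota in hi.
Qed.

Lemma inspanB_mem (s : seq {poly F}) x : x \in s -> inspanB s x.
Proof.
move=> xt; have hi : (index x s < size s)%N by rewrite index_mem.
exists (fun i => if i == Ordinal hi then 1 else 0).
rewrite (bigD1 (Ordinal hi)) //= eqxx scale1r nth_index // big1 ?addr0 //.
by move=> i /negbTE ->; rewrite scale0r.
Qed.

Variable sigma : {lrmorphism {poly F} -> {poly F}}.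
Variable delta : {linear {poly F} -> {poly F}}.
Hypothesis hdelta : forall a b : {poly F}, delta (a * b) = sigma a * delta b + delta a * b.

Lemma deg_localg : (size (sigma 'X) <= 2)%N -> locally_algebraic sigma.
Proof.
move=> hs s _; pose D := (\max_(p <- s) size p)%N.
exists (Xs D); split.
  by move=> v /span_size_le h; apply: inspan_Xs.
move=> v /Xs_size h; apply: inspan_Xs; apply: leq_trans h.
exact: (size_sigma_le hs).
Qed.

Lemma localg_deg : locally_algebraic sigma -> (size (sigma 'X) <= 2)%N.
Proof.
move=> hla; rewrite leqNgt; apply/negP => hbig.
have [u [hsub hstab]] := hla [:: 1; 'X] (inspanB_mem (mem_head _ _)).
have hX : inspanB u 'X by apply: hsub; apply: inspanB_mem; rewrite !inE eqxx orbT.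
have hit : forall k, inspanB u (iter k sigma 'X).
  by elim=> [|k IH] //=; apply: hstab.
pose d := (size (sigma 'X)).-1.
have hd : (1 < d)%N by move: hbig; rewrite /d; case: size => // -[|[|]].
have hsz : forall k, size (iter k sigma 'X) = (d ^ k).+1.
  elim=> [|k IH] /=; first by rewrite size_polyX.
  have p0 : iter k sigma 'X != 0 by rewrite -size_poly_eq0 IH.
  by rewrite (sigma_size hbig p0) IH /= expnSr.
pose Du := (\max_(p <- u) size p)%N.
have := span_size_le (hit Du); rewrite hsz -/Du => h.
have := ltn_expl Du hd; move: h; move: (d ^ Du)%N => x; lia.
Qed.
End LocAlg.


Section LimsupAux.
Variable R : realType.
Local Open Scope ereal_scope.

Lemma limsup_le_ev (u : (\bar R)^nat) (l : \bar R) N :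
  (forall n, (N <= n)%N -> u n <= l) -> limn_esup u <= l.
Proof.
move=> hN; rewrite limn_esup_lim; apply: lime_le; first exact: is_cvg_esups.
near=> n; apply: ge_ereal_sup => _ [k /= nk <-]; apply: hN.
apply: leq_trans nk; near: n; by exists N.
Unshelve. all: by end_near. Qed.

Lemma limsup_ge_ev (u : (\bar R)^nat) (l : \bar R) N :
  (forall n, (N <= n)%N -> l <= u n) -> l <= limn_esup u.
Proof.
move=> hN; rewrite limn_esup_lim; apply: lime_ge; first exact: is_cvg_esups.
near=> n; apply: le_trans (hN n _) _; last by apply: ereal_sup_ubound; exists n => /=.
near: n; by exists N.
Unshelve. all: by end_near. Qed.
End LimsupAux.

Section RealAux.
Variable R : realType.

Lemma ln_eventually (c e : R) : 0 < e ->
  exists N : nat, forall n, (N <= n)%N -> c <= e * ln (n%:R : R).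
Proof.
move=> e0; have [N hN] : exists N : nat, expR (c / e) < N%:R.
  by eexists; apply: truncnS_gt.
exists N => n hn.
have h1 : expR (c / e) < n%:R by apply: lt_le_trans hN _; rewrite ler_nat.
have : c / e <= ln (n%:R : R).
  rewrite -[X in X <= _]expRK ler_ln ?posrE ?expR_gt0 ?ltW //.
  exact: lt_trans (expR_gt0 _) h1.
by rewrite ler_pdivrMr // mulrC.
Qed.

Lemma ln_nat_gt0 n : (2 <= n)%N -> 0 < ln (n%:R : R).
Proof. by move=> hn; apply: ln_gt0; rewrite ltr1n. Qed.

Lemma ln_natM a b : (0 < a)%N -> (0 < b)%N ->
  ln ((a * b)%:R : R) = ln (a%:R : R) + ln (b%:R : R).
Proof. by move=> ha hb; rewrite natrM lnM // posrE ltr0n. Qed.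

Lemma ln_natX a k : (0 < a)%N -> ln ((a ^ k)%:R : R) = ln (a%:R : R) *+ k.
Proof. by move=> ha; rewrite natrX lnXn // ltr0n. Qed.

Lemma ln_nat_le a b : (0 < a)%N -> (a <= b)%N -> ln (a%:R : R) <= ln (b%:R : R).
Proof.
move=> ha hab; rewrite ler_ln ?posrE ?ltr0n ?ler_nat //.
exact: leq_trans hab.
Qed.
End RealAux.

Lemma natbnd1 fn n K L : (0 < n)%N -> (fn <= (n * K + 1) * (n * L + 1))%N ->
  (fn <= (n * (K + L + 1)) ^ 2)%N.
Proof. move=> h0 h; apply: leq_trans h _; rewrite expnS expn1; nia. Qed.

Section GK.
Variable R : realType.
Local Notation u f := (fun n : nat => ((ln (((f n : nat)%:R) : R) / ln (n%:R : R))%R)%:E).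

Lemma gk_upper (f : nat -> nat) K L :
  (forall n, (f n <= (n * K + 1) * (n * L + 1))%N) ->
  (limn_esup (u f) <= 2%:E)%E.
Proof.
move=> hf; apply/lee_addgt0Pr => e e0.
pose C := (K + L + 1)%N.
have hC : (0 < C)%N by rewrite /C addn1.
have [N hN] := ln_eventually (2 * ln (C%:R : R)) e0.
apply: (@limsup_le_ev _ _ _ (maxn N 2)) => n; rewrite geq_max => /andP[hNn h2n].
rewrite -EFinD lee_fin.
have lnpos := ln_nat_gt0 R h2n.
have hn0 : (0 < n)%N by apply: leq_trans h2n.
rewrite ler_pdivrMr //.
have hb : (f n <= (n * C) ^ 2)%N by apply: natbnd1.
have lnC : 0 <= ln (C%:R : R) by apply: ln_ge0; rewrite ler1n.
have hlf : ln ((f n)%:R : R) <= 2 * ln (n%:R : R) + 2 * ln (C%:R : R).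
  have [f0|fpos] := posnP (f n).
    by rewrite f0 ln0 //; apply: addr_ge0; apply: mulr_ge0 => //; exact: ltW.
  apply: le_trans (ln_nat_le R fpos hb) _.
  rewrite ln_natX ?muln_gt0 ?hn0 // ln_natM // -mulr_natl; lra.
have := hN n hNn; rewrite mulrDl; lra.
Qed.

Lemma natbnd2 fn n : (2 <= n)%N -> (n./2 * n./2 <= fn)%N -> (n * n <= 16 * fn)%N.
Proof.
move=> h2 h; have : (n <= (n./2).*2.+1)%N.
  by rewrite -[X in (X <= _)%N](odd_double_half n); case: odd.
move: (n./2) h => m; nia.
Qed.

Lemma gk_lower (f : nat -> nat) :
  (forall n, (n./2 * n./2 <= f n)%N) -> (2%:E <= limn_esup (u f))%E.
Proof.
move=> hf; apply/lee_subgt0Pr => e e0.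
have [N hN] := ln_eventually (ln (16%:R : R)) e0.
apply: (@limsup_ge_ev _ _ _ (maxn N 2)) => n; rewrite geq_max => /andP[hNn h2n].
rewrite -EFinB lee_fin.
have lnpos := ln_nat_gt0 R h2n.
have hn0 : (0 < n)%N by apply: leq_trans h2n.
rewrite ler_pdivlMr //.
have hb := natbnd2 h2n (hf n).
have fpos : (0 < f n)%N by move: hb hn0; move: (f n) => x; nia.
have hnn : (0 < n * n)%N by rewrite muln_gt0 hn0.
have := ln_nat_le R hnn hb.
rewrite !ln_natM // => h.
have := hN n hNn; rewrite mulrBl; lra.
Qed.
End GK.

Lemma natbnd3 j : (j * j.+1 <= 2 * 2 ^ j)%N.
Proof.
elim: j => [|j IH] //; case: j IH => [|[|j]] // IH.
rewrite expnS; nia.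
Qed.

Section GKinf.
Variable R : realType.
Local Notation u f := (fun n : nat => ((ln (((f n : nat)%:R) : R) / ln (n%:R : R))%R)%:E).

Lemma gk_inf (f : nat -> nat) :
  (forall m, (2 ^ m <= f m.*2)%N) -> limn_esup (u f) = +oo%E.
Proof.
move=> hf.
suff H : forall M : R, (M%:E <= limn_esup (u f))%E.
  case E: (limn_esup (u f)) => [r| |] //.
    by have := H (r + 1); rewrite E lee_fin => h; exfalso; clear -h; lra.
  by have := H 0; rewrite E.
move=> M; rewrite limn_esup_lim; apply: lime_ge; first exact: is_cvg_esups.
apply: nearW => n.
have [J hJ] : exists J : nat, 2 * M < J%:R by eexists; apply: truncnS_gt.
pose j := maxn J n.
pose k := (2 ^ j).*2.
have hk : k = (2 ^ j.+1)%N by rewrite /k -muln2 expnSr.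
have hnk : (n <= k)%N.
  rewrite hk; apply: leq_trans (ltnW (ltn_expl _ (isT : (1 < 2)%N))).
  by apply: leq_trans (leq_maxr J n) _.
apply: (@le_trans _ _ (u f k)); last by apply: ereal_sup_ubound; exists k.
rewrite lee_fin.
have a0 : 0 < ln (2%:R : R) by apply: ln_nat_gt0.
have lnk : ln (k%:R : R) = ln (2%:R : R) * (j.+1)%:R by rewrite hk ln_natX // mulr_natr.
have hfk : ln (2%:R : R) * (2 ^ j)%:R <= ln ((f k)%:R : R).
  by rewrite mulr_natr -ln_natX //; apply: ln_nat_le; rewrite ?expn_gt0 // /k hf.
have kpos : 0 < ln (k%:R : R) by rewrite lnk mulr_gt0 // ltr0n.
rewrite ler_pdivlMr //; apply: le_trans hfk; rewrite lnk.
have hx : 2 * M < j%:R.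
  by apply: lt_le_trans hJ _; rewrite ler_nat leq_maxl.
have hp : (j%:R * (j%:R + 1) <= 2 * (2 ^ j)%:R :> R).
  by have := natbnd3 j; rewrite -(ler_nat R) !natrM natrX -addn1 natrD.
have hx0 : (0 <= j%:R :> R) by [].
have hM : M * (j.+1)%:R <= (2 ^ j)%:R.
  rewrite -addn1 natrD; nra.
rewrite mulrCA; apply: ler_wpM2l => //; exact: ltW.
Qed.
End GKinf.


Theorem mainTheorem5 (F : fieldType)
  (sigma : {lrmorphism {poly F} -> {poly F}})
  (delta : {linear {poly F} -> {poly F}})
  (hdelta : forall a b : {poly F}, delta (a * b) = sigma a * delta b + delta a * b) :
  [<-> ore_GKdim sigma delta = 2%:E;
       (ore_GKdim sigma delta < +oo)%E;
       (size (sigma 'X) <= 2)%N;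
       locally_algebraic sigma].
Proof.
have s0one : inspanA (s0 F) 1 by apply: inspan_mem; rewrite inE eqxx.
have P20 : (size (sigma 'X) <= 2)%N -> ore_GKdim sigma delta = 2%:E.
  move=> hs; apply/eqP; rewrite eq_le; apply/andP; split.
    apply: ge_ereal_sup => _ [s _ <-].
    have [K [L h]] := powdim_ub hdelta hs s.
    exact: (gk_upper _ h).
  apply: le_trans (gk_lower _ (powdim_sq hdelta)) _.
  by apply: ereal_sup_ubound; exists (s0 F).
tfae.
- by move=> ->; rewrite ltey.
- move=> hlt; rewrite leqNgt; apply/negP => hbig.
  have hinf : ore_gk_sub sigma delta (s0 F) = +oo%E.
    exact: (@gk_inf _ (ore_powdim sigma delta (s0 F)) (powdim_exp delta hbig)).
  have : (+oo <= ore_GKdim sigma delta)%E.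
    by rewrite -hinf; apply: ereal_sup_ubound; exists (s0 F).
  by rewrite leye_eq => /eqP h; rewrite h in hlt.
- exact: deg_localg.
- by move=> hla; apply: P20; exact: localg_deg.
Qed.
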